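(* Let $N$ be a society, $D$ an $N$-coalition, $\nabla$ an ES basic fusion operator satisfying (ESF-SD), (ESF-P) and (ESF-I), and $w\neq w'$ interpretations. Suppose $E_{w,w'},E_{w'}\in\mathcal E$ satisfy $[\![B(E_{w,w'})]\!]=\{w,w'\}$, $[\![B(E_{w'})]\!]=\{w'\}$, and $D$ is locally decisive for $E_{w,w'}$ against $E_{w'}$. Then for every interpretation $w''\notin\{w,w'\}$ and all $E_{w,w''},E_{w''}\in\mathcal E$ with $[\![B(E_{w,w''})]\!]=\{w,w''\}$ and $[\![B(E_{w''})]\!]=\{w''\}$, $D$ is decisive for $E_{w,w''}$ against $E_{w''}$.
   Context: Setting: epistemic space $(\mathcal E,B,\mathcal L_{\mathcal P})$ ($\mathcal E$ nonempty, $B:\mathcal E\to$ propositional formulas over finite $\mathcal P$, $|\mathcal P|\ge2$, image modulo equivalence exactly the consistent formulas; $[\![\phi]\!]$ models; $\varphi_M$ a formula with models exactly $M$); agents: well-ordered set $\mathcal S$; society: nonempty finite $N\subseteq\mathcal S$; $N$-profile $\Phi:N\to\mathcal E$, $E_i=\Phi(i)$, identified with $E_i$ if $N=\{i\}$; profiles on $\{i_1<\dots<i_n\}$, $\{j_1<\dots<j_m\}$ equivalent if $n=m$ and entries coincide position-wise. ES basic fusion operator: a map $\nabla(\Phi,E)\in\mathcal E$ with (ESF1) $B(\nabla(\Phi,E))\vdash B(E)$; (ESF2) equivalent profiles and $B(E)\equiv B(E')$ give equivalent $B(\nabla)$; (ESF3) if $B(E)\equiv B(E')\wedge B(E'')$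 then $B(\nabla(\Phi,E'))\wedge B(E'')\vdash B(\nabla(\Phi,E))$; (ESF4) if moreover $B(\nabla(\Phi,E'))\wedge B(E'')\nvdash\bot$ then $B(\nabla(\Phi,E))\vdash B(\nabla(\Phi,E'))\wedge B(E'')$. (ESF-SD): for every agent $i$, interpretations $w_1,w_2,w_3$ and $E_{w_1,w_2},E_{w_2,w_3}$ with $[\![B(E_{w_1,w_2})]\!]=\{w_1,w_2\}$, $[\![B(E_{w_2,w_3})]\!]=\{w_2,w_3\}$, there exist $i$-profiles realising each of: (i) $B(\nabla(E_i,E_{w_1,w_2}))\equiv\varphi_{w_1,w_2}$ and $B(\nabla(E_i,E_{w_2,w_3}))\equiv\varphi_{w_2,w_3}$; (ii) $\equiv\varphi_{w_1,w_2}$ and $\equiv\varphi_{w_2}$; (iii) $\equiv\varphi_{w_1}$ and $\equiv\varphi_{w_2,w_3}$; (iv) $\equiv\varphi_{w_1}$ and $\equiv\varphi_{w_2}$. (ESF-P): for every $N$, $N$-profile $\Phi$, $E,E'$: if $\bigwedge_{i\in N}B(\nabla(E_i,E))\nvdash\bot$ and $B(\nabla(E_i,E))\wedge B(E')\vdash\bot$ for all $i\in N$ then $B(\nabla(\Phi,E))\wedge B(E')\vdash\bot$. (ESF-I): for every $N$, $N$-profiles $\Phi,\Phi'$, $E$: if for every $E'$ with $B(E')\vdash B(E)$, $B(\nabla(E_j,E'))\equiv B(\nabla(E'_j,E'))$ for all $j\in N$, then $B(\nabla(\Phi,E))\equiv B(\nabla(\Phi',E))$. An $N$-coalition is a subset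 $D\subseteq N$. $D$ is locally decisive for $E$ against $E'$ if for every $N$-profile $\Phi$ with (i) $B(\nabla(E_i,E))\wedge B(E')\vdash\bot$ for all $i\in D$, (ii) $B(\nabla(E_j,E))\equiv B(E')$ for all $j\in N\setminus D$, (iii) $\bigwedge_{i\in D}B(\nabla(E_i,E))\nvdash\bot$, we have $B(\nabla(\Phi,E))\wedge B(E')\vdash\bot$. $D$ is decisive for $E$ against $E'$ if the same conclusion holds for every $N$-profile satisfying only (i) and (iii). *)

(* Defs.v *)
From mathcomp Require Import all_boot all_order.
Set Implicit Arguments. Unset Strict Implicit. Unset Printing Implicit Defensive.
Import Order.TTheory.

Inductive form (P : Type) : Type :=
  | FVar of P
  | FTop
  | FBot
  | FNeg of form P
  | FAnd of form P & form P
  | FOr of form P & form P.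
Arguments FTop {P}.
Arguments FBot {P}.

Definition interp (P : finType) := {ffun P -> bool}.

Fixpoint eval (P : finType) (w : interp P) (f : form P) : bool :=
  match f with
  | FVar p => w p
  | FTop => true
  | FBot => false
  | FNeg g => ~~ eval w g
  | FAnd g h => eval w g && eval w h
  | FOr g h => eval w g || eval w h
  end.

Definition models (P : finType) (f : form P) : {set interp P} :=
  [set w | eval w f].

Definition entails (P : finType) (f g : form P) : Prop :=
  forall w : interp P, eval w f -> eval w g.
Definition fequiv (P : finType) (f g : form P) : Prop :=
  entails f g /\ entails g f.
Definition consistent (P : finType) (f : form P) : Prop := ~ entails f FBot.

Definition bigAnd (P : finType) (s : seq (form P)) : form P := foldr (@FAnd P) FTop s.

Definition epistemic_space (P : finType) (E : Type) (B : E -> form P) : Prop :=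
  inhabited E /\ (forall f : form P, consistent f <-> exists e : E, fequiv (B e) f).

(** Agents form a well-ordered set S (an orderType whose strict order is
    well-founded, assumed in the theorem).  A society is a nonempty finite
    subset N of S, given as a duplicate-free nonempty list.  An N-profile is
    a map S -> E of which only the values on N matter. *)
Definition society d (S : orderType d) (N : seq S) : Prop := N != [::] /\ uniq N.

Definition equiv_profiles d (S : orderType d) (E : Type)
  (N : seq S) (Phi : S -> E) (M : seq S) (Psi : S -> E) : Prop :=
  size N = size M /\ map Phi (sort <=%O N) = map Psi (sort <=%O M).

(** A fusion operator: nabla N Phi E = nabla(Phi, E) for the N-profile Phi. *)
Definition fusion_op d (S : orderType d) (E : Type) := seq S -> (S -> E) -> E -> E.

(** nabla(E_i, E) for the {i}-profile E_i *)
Definition nab1 d (S : orderType d) (E : Type) (nabla : fusion_op S E)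
  (i : S) (Ei : E) (e : E) : E := nabla [:: i] (fun _ => Ei) e.

Section FusionProps.
Variables (P : finType) (E : Type) (B : E -> form P) (d : Order.disp_t)
  (S : orderType d) (nabla : fusion_op S E).

Definition ESF1 : Prop := forall N, society N -> forall (Phi : S -> E) (e : E),
  entails (B (nabla N Phi e)) (B e).

Definition ESF2 : Prop := forall N M, society N -> society M ->
  forall (Phi Psi : S -> E) (e e' : E),
  equiv_profiles N Phi M Psi -> fequiv (B e) (B e') ->
  fequiv (B (nabla N Phi e)) (B (nabla M Psi e')).

Definition ESF3 : Prop := forall N, society N -> forall (Phi : S -> E) (e e' e'' : E),
  fequiv (B e) (FAnd (B e') (B e'')) ->
  entails (FAnd (B (nabla N Phi e')) (B e'')) (B (nabla N Phi e)).

Definition ESF4 : Prop := forall N, society N -> forall (Phi : S -> E) (e e' e'' : E),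
  fequiv (B e) (FAnd (B e') (B e'')) ->
  consistent (FAnd (B (nabla N Phi e')) (B e'')) ->
  entails (B (nabla N Phi e)) (FAnd (B (nabla N Phi e')) (B e'')).

Definition ES_basic_fusion : Prop := [/\ ESF1, ESF2, ESF3 & ESF4].

Definition ESF_SD : Prop :=
  forall (i : S) (w1 w2 w3 : interp P), w1 != w2 -> w2 != w3 -> w1 != w3 ->
  forall e12 e23 : E,
  models (B e12) = [set w1; w2] -> models (B e23) = [set w2; w3] ->
  [/\ (exists Ei, models (B (nab1 nabla i Ei e12)) = [set w1; w2] /\
                  models (B (nab1 nabla i Ei e23)) = [set w2; w3]),
      (exists Ei, models (B (nab1 nabla i Ei e12)) = [set w1; w2] /\
                  models (B (nab1 nabla i Ei e23)) = [set w2]),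
      (exists Ei, models (B (nab1 nabla i Ei e12)) = [set w1] /\
                  models (B (nab1 nabla i Ei e23)) = [set w2; w3]) &
      (exists Ei, models (B (nab1 nabla i Ei e12)) = [set w1] /\
                  models (B (nab1 nabla i Ei e23)) = [set w2])].

Definition ESF_P : Prop :=
  forall N, society N -> forall (Phi : S -> E) (e e' : E),
  consistent (bigAnd [seq B (nab1 nabla i (Phi i) e) | i <- N]) ->
  (forall i, i \in N -> ~ consistent (FAnd (B (nab1 nabla i (Phi i) e)) (B e'))) ->
  ~ consistent (FAnd (B (nabla N Phi e)) (B e')).

Definition ESF_I : Prop :=
  forall N, society N -> forall (Phi Phi' : S -> E) (e : E),
  (forall e' : E, entails (B e') (B e) ->
     forall j, j \in N ->
     fequiv (B (nab1 nabla j (Phi j) e')) (B (nab1 nabla j (Phi' j) e'))) ->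
  fequiv (B (nabla N Phi e)) (B (nabla N Phi' e)).

(** Coalitions D (subsets of N, given as lists) and decisiveness. *)
Definition locally_decisive (N D : seq S) (e e' : E) : Prop :=
  forall Phi : S -> E,
  (forall i, i \in D -> ~ consistent (FAnd (B (nab1 nabla i (Phi i) e)) (B e'))) ->
  (forall j, j \in N -> j \notin D -> fequiv (B (nab1 nabla j (Phi j) e)) (B e')) ->
  consistent (bigAnd [seq B (nab1 nabla i (Phi i) e) | i <- D]) ->
  ~ consistent (FAnd (B (nabla N Phi e)) (B e')).

Definition decisive (N D : seq S) (e e' : E) : Prop :=
  forall Phi : S -> E,
  (forall i, i \in D -> ~ consistent (FAnd (B (nab1 nabla i (Phi i) e)) (B e'))) ->
  consistent (bigAnd [seq B (nab1 nabla i (Phi i) e) | i <- D]) ->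
  ~ consistent (FAnd (B (nabla N Phi e)) (B e')).

End FusionProps.

(* Main.v *)
Require Import Defs.
From mathcomp Require Import all_boot all_order.
From Stdlib Require Import ClassicalEpsilon.
Set Implicit Arguments. Unset Strict Implicit.

Lemma models_and (P : finType) (f g : form P) : models (FAnd f g) = models f :&: models g.
Proof. by apply/setP=> x; rewrite !inE. Qed.

Lemma entailsP (P : finType) (f g : form P) : entails f g <-> models f \subset models g.
Proof.
split=> H; first by apply/subsetP=> x; rewrite !inE; exact: H.
by move=> x Hx; have := subsetP H x; rewrite !inE; apply.
Qed.

Lemma fequivP (P : finType) (f g : form P) : fequiv f g <-> models f = models g.
Proof.
split; first by case=> /entailsP H1 /entailsP H2; apply/eqP; rewrite eqEsubset H1 H2.
by move=> H; split; apply/entailsP; rewrite H.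
Qed.

Lemma consP (P : finType) (f : form P) : consistent f <-> models f != set0.
Proof.
split=> H.
  case: (boolP (models f == set0)) => // /eqP H0; exfalso; apply: H => x Hx.
  have : x \in models f by rewrite inE.
  by rewrite H0 inE.
by case/set0Pn: H => x; rewrite inE => Hx Hent; have := Hent x Hx.
Qed.

Lemma eval_bigAnd (P : finType) (x : interp P) s : eval x (bigAnd s) = all (eval x) s.
Proof. by elim: s => //= f s ->. Qed.

Definition lit (P : finType) (u : interp P) (p : P) : form P :=
  if u p then FVar p else FNeg (FVar p).
Definition charf (P : finType) (u : interp P) := bigAnd [seq lit u p | p <- enum P].

Lemma eval_charf (P : finType) (x u : interp P) : eval x (charf u) = (x == u).
Proof.
rewrite /charf eval_bigAnd all_map.
have E p : eval x (lit u p) = (x p == u p).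
  by rewrite /lit; case: (u p) => /=; case: (x p).
apply/allP/eqP => [H|->].
  apply/(@ffunP P (fun _ => bool)) => p; apply/eqP; rewrite -E. apply: H. by rewrite mem_enum.
by move=> p _ /=; rewrite /lit; case H: (u p) => /=; rewrite H.
Qed.

Definition setf (P : finType) (A : {set interp P}) : form P :=
  foldr (fun u f => FOr (charf u) f) FBot (enum A).

Lemma models_setf (P : finType) (A : {set interp P}) : models (setf A) = A.
Proof.
apply/setP => x; rewrite inE /setf -mem_enum.
by elim: (enum A) => //= u s ->; rewrite eval_charf in_cons.
Qed.

Lemma two_elems (I : finType) (w v z y u : I) :
  z \in [set w; v] -> y \in [set w; v] -> u \in [set w; v] -> z != u -> y != u -> z = y.
Proof.
by rewrite !inE => /orP[]/eqP-> /orP[]/eqP-> /orP[]/eqP->; rewrite ?eqxx.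
Qed.

Lemma single (I : finType) (X : {set I}) (a b : I) :
  X \subset [set a; b] -> X != set0 -> b \notin X -> X = [set a].
Proof.
move=> Hs /set0Pn [y Hy] Hb; apply/eqP; rewrite eqEsubset; apply/andP; split.
  apply/subsetP => z Hz; have := subsetP Hs z Hz; rewrite !inE => /orP[] // /eqP Ez.
  by move: Hb; rewrite -Ez Hz.
apply/subsetP => z; rewrite inE => /eqP ->.
have := subsetP Hs y Hy; rewrite !inE => /orP[] /eqP Ey; first by rewrite -Ey.
by move: Hb; rewrite -Ey Hy.
Qed.

Definition ratprops (I : finType) (E : Type) (mB c : E -> {set I}) : Prop :=
  [/\ forall e, c e \subset mB e, forall e, c e != set0 &
      forall e e', mB e \subset mB e' -> c e' :&: mB e != set0 -> c e = c e' :&: mB e].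

Lemma triple (I : finType) (E : Type) (mB c : E -> {set I}) :
  ratprops mB c ->
  forall (a b x : I), a != b -> b != x -> a != x ->
  forall (eab ebx eax T : E), mB eab = [set a; b] -> mB ebx = [set b; x] ->
  mB eax = [set a; x] -> mB T = [set a; b; x] ->
  c eab = [set a] -> b \in c ebx -> c eax = [set a].
Proof.
case=> Hsub Hne Hrat a b x hab hbx hax eab ebx eax T Hab Hbx Hax HT Ca Cb.
have XT : c T \subset [set a; b; x] by rewrite -HT.
have nb : b \notin c T.
  apply/negP => bX.
  have H : c eab = c T :&: mB eab.
    apply: Hrat; first by rewrite Hab HT; apply/subsetP => y; rewrite !inE; by case: (y == a); case: (y == b); case: (y == x).
    by apply/set0Pn; exists b; rewrite inE bX Hab !inE eqxx orbT.
  have : b \in c eab by rewrite H inE bX Hab !inE eqxx orbT.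
  by rewrite Ca inE eq_sym (negbTE hab).
have nx : x \notin c T.
  apply/negP => xX.
  have H : c ebx = c T :&: mB ebx.
    apply: Hrat; first by rewrite Hbx HT; apply/subsetP => y; rewrite !inE; by case: (y == a); case: (y == b); case: (y == x).
    by apply/set0Pn; exists x; rewrite inE xX Hbx !inE eqxx orbT.
  by move: Cb; rewrite H inE (negbTE nb).
have Xa : c T = [set a].
  apply: (@single _ _ a x) => //.
  apply/subsetP => y Hy; have := subsetP XT y Hy; rewrite !inE => /orP[/orP[/eqP->|/eqP Ey]|/eqP->]; rewrite ?eqxx ?orbT //.
  by move: nb; rewrite -Ey Hy.
have -> : c eax = c T :&: mB eax.
  apply: Hrat; first by rewrite Hax HT; apply/subsetP => y; rewrite !inE; by case: (y == a); case: (y == b); case: (y == x).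
  by apply/set0Pn; exists a; rewrite inE Xa Hax !inE eqxx.
rewrite Xa Hax; apply/setP => y; rewrite !inE; case: eqP => //= ->; by rewrite eqxx.
Qed.

Lemma determ (I : finType) (E : Type) (mB c1 c2 : E -> {set I}) :
  ratprops mB c1 -> ratprops mB c2 ->
  forall (w v : I) (e0 e : E), mB e0 = [set w; v] -> mB e \subset mB e0 ->
  c1 e0 = c2 e0 -> c1 e = c2 e.
Proof.
move=> P1 P2 w v e0 e H0 He Heq.
have aux : forall c, ratprops mB c -> c e0 :&: mB e == set0 -> c e = mB e.
  move=> c [Hsub Hne Hrat] Hem.
  apply/eqP; rewrite eqEsubset Hsub /=; apply/subsetP => z zm.
  case/set0Pn: (Hne e) => y Hy.
  case/set0Pn: (Hne e0) => u Hu.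
  have Hu2 : u \in [set w; v] by rewrite -H0; apply: (subsetP (Hsub e0)).
  have Hy1 : y \in mB e by apply: (subsetP (Hsub e)).
  have Hz2 : z \in [set w; v] by rewrite -H0; apply: (subsetP He).
  have Hy2 : y \in [set w; v] by rewrite -H0; apply: (subsetP He).
  have nu : forall t, t \in mB e -> t != u.
    move=> t Ht; apply/eqP => Et; move/eqP: Hem; apply/eqP/set0Pn.
    by exists u; rewrite inE Hu -Et Ht.
  by rewrite (two_elems Hz2 Hy2 Hu2 (nu z zm) (nu y Hy1)).
case: P1 => [S1 N1 R1]; case: P2 => [S2 N2 R2].
case: (boolP (c1 e0 :&: mB e == set0)) => Hc.
  have A1 := aux c1 (And3 S1 N1 R1) Hc.
  have A2 : c2 e = mB e by apply: aux; [split | rewrite -Heq].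
  by rewrite A1 A2.
by rewrite (R1 _ _ He Hc) (R2 _ _ He) ?Heq // -Heq.
Qed.

Lemma consB (P : finType) (E : Type) (B : E -> form P) :
  epistemic_space B -> forall e, models (B e) != set0.
Proof. by case=> _ H e; apply/consP; apply/H; exists e; split. Qed.

Lemma props (P : finType) (E : Type) (B : E -> form P) (d : Order.disp_t) (S : orderType d)
  (nabla : fusion_op S E) :
  epistemic_space B -> ES_basic_fusion B nabla ->
  forall Ns, society Ns -> forall Phi,
  ratprops (fun e => models (B e)) (fun e => models (B (nabla Ns Phi e))).
Proof.
move=> Hsp [H1 H2 H3 H4] Ns HNs Phi; split.
- by move=> e; apply/entailsP; apply: H1.
- by move=> e; apply: consB.
- move=> e e' Hs Hc.
  have Hf : fequiv (B e) (FAnd (B e') (B e)).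
    by apply/fequivP; rewrite models_and; apply/esym/setIidPr.
  apply/eqP; rewrite eqEsubset; apply/andP; split.
    rewrite -models_and; apply/entailsP; apply: H4 => //.
    by apply/consP; rewrite models_and.
  by rewrite -models_and; apply/entailsP; apply: H3.
Qed.

Lemma exE (P : finType) (E : Type) (B : E -> form P) :
  epistemic_space B -> forall A, A != set0 -> exists e, models (B e) = A.
Proof.
case=> _ H A HA.
have : consistent (setf A) by apply/consP; rewrite models_setf.
case/H => e /fequivP; rewrite models_setf => He; by exists e.
Qed.

Lemma incons_notin (P : finType) (f g : form P) (b : interp P) :
  models g = [set b] -> ~ consistent (FAnd f g) -> b \notin models f.
Proof.
move=> Hg Hc; apply/negP => Hb; apply: Hc; apply/consP; rewrite models_and Hg.
by apply/set0Pn; exists b; rewrite inE Hb inE eqxx.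
Qed.

Theorem proposition14
  (P : finType) (E : Type) (B : E -> form P) (d : Order.disp_t) (S : orderType d)
  (HP : 2 <= #|P|) (Hspace : epistemic_space B)
  (Hwo : well_founded (fun x y : S => (x < y)%O))
  (nabla : fusion_op S E)
  (Hbasic : ES_basic_fusion B nabla)
  (HSD : ESF_SD B nabla) (HPar : ESF_P B nabla) (HI : ESF_I B nabla)
  (N : seq S) (HN : society N) (D : seq S) (HD : {subset D <= N})
  (w w' : interp P) (Hww' : w != w')
  (Eww' Ew' : E)
  (HEww' : models (B Eww') = [set w; w'])
  (HEw' : models (B Ew') = [set w'])
  (Hloc : locally_decisive B nabla N D Eww' Ew') :
  forall w'' : interp P, w'' != w -> w'' != w' ->
  forall Eww'' Ew'' : E,
  models (B Eww'') = [set w; w''] ->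
  models (B Ew'') = [set w''] ->
  decisive B nabla N D Eww'' Ew''.
Proof.
move=> v Hvw Hvw' Ewv Ev HEwv HEv Phi HiD Hcons.
have Hwv : w != v by rewrite eq_sym.
have Hw'v : w' != v by rewrite eq_sym.
have Hw'w : w' != w by rewrite eq_sym.
have [Ew'v HEw'v] : exists e, models (B e) = [set w'; v].
  by apply: exE => //; apply/set0Pn; exists w'; rewrite !inE eqxx.
have [T HT] : exists e, models (B e) = [set w; w'; v].
  by apply: exE => //; apply/set0Pn; exists w; rewrite !inE eqxx.
have soc1 : forall i : S, society [:: i] by [].
pose ci i Ei := fun e => models (B (nab1 nabla i Ei e)).
have Pci : forall i Ei, ratprops (fun e => models (B e)) (ci i Ei).
  by move=> i Ei; apply: (props Hspace Hbasic (soc1 i)).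
have HYD : forall i, i \in D -> ci i (Phi i) Ewv = [set w].
  move=> i iD; case: (Pci i (Phi i)) => Hs Hn _.
  apply: (@single _ _ w v); first by rewrite -HEwv.
    exact: Hn.
  by apply: (incons_notin HEv); apply: HiD.
pose Good i Ei := [/\ ci i Ei Ewv = ci i (Phi i) Ewv, ci i Ei Ew'v = [set w'] &
   ci i Ei Eww' = (if i \in D then [set w] else [set w'])].
have exGood : forall i, exists Ei, Good i Ei.
  move=> i; case: (boolP (i \in D)) => iD.
    case: (HSD i w w' v Hww' Hw'v Hwv Eww' Ew'v HEww' HEw'v) => _ _ _ [Ei [H1 H2]].
    exists Ei; split; rewrite ?iD //; rewrite (HYD i iD).
    apply: (triple (Pci i Ei) Hww' Hw'v Hwv HEww' HEw'v HEwv HT H1).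
    by rewrite /ci H2 inE.
  have HEw'w : models (B Eww') = [set w'; w].
    by rewrite HEww'; apply/setP => z; rewrite !inE orbC.
  have HEvw : models (B Ewv) = [set v; w].
    by rewrite HEwv; apply/setP => z; rewrite !inE orbC.
  have HT1 : models (B T) = [set w'; w; v].
    by rewrite HT; apply/setP => z; rewrite !inE; case: (z == w); case: (z == w').
  have HT2 : models (B T) = [set w'; v; w].
    by rewrite HT; apply/setP => z; rewrite !inE; case: (z == w); case: (z == w'); case: (z == v).
  have [HYs HYn _] := Pci i (Phi i).
  have HYs' := HYs Ewv; rewrite /= HEwv in HYs'.
  case Hw: (w \in ci i (Phi i) Ewv); case Hv: (v \in ci i (Phi i) Ewv).
  - have YE : ci i (Phi i) Ewv = [set w; v].
      apply/eqP; rewrite eqEsubset HYs' /=; by apply/subsetP => z /set2P[]->.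
    case: (HSD i w' w v Hw'w Hwv Hw'v Eww' Ewv HEw'w HEwv) => _ _ [Ei [H1 H2]] _.
    exists Ei; split; first by rewrite YE /ci H2.
      apply: (triple (Pci i Ei) Hw'w Hwv Hw'v HEw'w HEwv HEw'v HT1 H1).
      by rewrite /ci H2 !inE eqxx.
    by rewrite (negbTE iD) /ci H1.
  - have YE : ci i (Phi i) Ewv = [set w].
      by apply: (@single _ _ w v HYs' (HYn Ewv)); rewrite Hv.
    case: (HSD i w' w v Hw'w Hwv Hw'v Eww' Ewv HEw'w HEwv) => _ _ _ [Ei [H1 H2]].
    exists Ei; split; first by rewrite YE /ci H2.
      apply: (triple (Pci i Ei) Hw'w Hwv Hw'v HEw'w HEwv HEw'v HT1 H1).
      by rewrite /ci H2 !inE eqxx.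
    by rewrite (negbTE iD) /ci H1.
  - have YE : ci i (Phi i) Ewv = [set v].
      apply: (@single _ _ v w _ (HYn Ewv)); first by rewrite -HEvw HEwv.
      by rewrite Hw.
    case: (HSD i w' v w Hw'v Hvw Hw'w Ew'v Ewv HEw'v HEvw) => _ _ _ [Ei [H1 H2]].
    exists Ei; split; first by rewrite YE /ci H2.
      by rewrite /ci H1.
    rewrite (negbTE iD).
    apply: (triple (Pci i Ei) Hw'v Hvw Hw'w HEw'v HEvw HEw'w HT2 H1).
    by rewrite /ci H2 !inE eqxx.
  - exfalso; case/set0Pn: (HYn Ewv) => z Hz.
    have := subsetP HYs' z Hz; rewrite !inE => /orP[]/eqP Ez; subst z.
      by rewrite Hw in Hz.
    by rewrite Hv in Hz.
pose Phi' := fun i => proj1_sig (constructive_indefinite_description _ (exGood i)).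
have HG : forall i, Good i (Phi' i).
  by move=> i; rewrite /Phi'; case: (constructive_indefinite_description _ _).
pose cs := fun e => models (B (nabla N Phi' e)).
have Pcs : ratprops (fun e => models (B e)) cs by apply: props.
have [Css Csn _] := Pcs.
have LD := Hloc Phi'.
have Cww' : cs Eww' = [set w].
  apply: (@single _ _ w w'); first by rewrite -HEww'; apply: Css.
    exact: Csn.
  apply: (incons_notin HEw'); apply: LD.
  - move=> i iD.
    have H3 : models (B (nab1 nabla i (Phi' i) Eww')) = [set w].
      by case: (HG i) => _ _; rewrite iD; apply.
    move/consP; rewrite models_and H3 HEw' => /set0Pn [z].
    by rewrite !inE => /andP[/eqP -> ]; rewrite (negbTE Hww').
  - move=> j jN jD; apply/fequivP.
    by case: (HG j) => _ _; rewrite (negbTE jD) HEw'; apply.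
  - apply/consP/set0Pn; exists w; rewrite inE eval_bigAnd all_map; apply/allP => i iD.
    have H3 : models (B (nab1 nabla i (Phi' i) Eww')) = [set w].
      by case: (HG i) => _ _; rewrite iD; apply.
    have : w \in models (B (nab1 nabla i (Phi' i) Eww')) by rewrite H3 inE.
    by rewrite inE => H; exact: H.
have Cw'v : cs Ew'v = [set w'].
  apply: (@single _ _ w' v); first by rewrite -HEw'v; apply: Css.
    exact: Csn.
  apply: (incons_notin HEv); apply: HPar => //.
  - apply/consP/set0Pn; exists w'; rewrite inE eval_bigAnd all_map; apply/allP => i iN.
    have : w' \in models (B (nab1 nabla i (Phi' i) Ew'v)) by case: (HG i) => _ H2 _; move: H2; rewrite /ci => ->; rewrite inE.
    by rewrite inE => H; exact: H.
  - move=> i iN; have H2 : models (B (nab1 nabla i (Phi' i) Ew'v)) = [set w'].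
      by case: (HG i) => _ H2 _; apply: H2.
    move/consP; rewrite models_and H2 HEv => /set0Pn [z].
    by rewrite !inE => /andP[/eqP -> ]; rewrite (negbTE Hw'v).
have Cwv : cs Ewv = [set w].
  apply: (triple Pcs Hww' Hw'v Hwv HEww' HEw'v HEwv HT Cww').
  by rewrite Cw'v inE.
have HIr : fequiv (B (nabla N Phi Ewv)) (B (nabla N Phi' Ewv)).
  apply: HI => // e' He' j jN.
  apply/fequivP.
  apply: (determ (Pci j (Phi j)) (Pci j (Phi' j)) HEwv).
    by apply/entailsP.
  by case: (HG j) => ->.
move/consP; rewrite models_and (proj1 (fequivP _ _) HIr) -/(cs Ewv) Cwv HEv => /set0Pn [z].
by rewrite !inE => /andP[/eqP -> ]; rewrite (negbTE Hwv).
Qed.
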